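(* Let $f,g\in\mathbb N\{x_1,\dots,x_n\}$ have disjoint supports, and suppose $f-g$ is a polynomial identity of the ring $M_n(\mathbb Z)$ (i.e. $f(A_1,\dots,A_n)-g(A_1,\dots,A_n)=0$ for all $A_i\in M_n(\mathbb Z)$). Then $(f,g)$ is a semiring$^\dagger$ polynomial identity of $M_n(R)$ for every commutative semiring$^\dagger$ $R$.
   Context: A semiring$^\dagger$ $(R,+,\cdot,1)$ is a set with binary operations such that $(R,+)$ is an abelian semigroup, $(R,\cdot,1)$ is a monoid, and multiplication distributes over addition (no zero element required); it is commutative if multiplication is commutative. $\mathbb N\{x_1,\dots,x_m\}$ denotes the free $\mathbb N$-semiring$^\dagger$: the monoid semiring over $\mathbb N$ of the free (word) monoid on noncommuting indeterminates $x_1,\dots,x_m$; the support of $f$ is the set of words with nonzero coefficient. A pair $(f,g)$ of elements of $\mathbb N\{x_1,\dots,x_m\}$ is a (semiring$^\dagger$) polynomial identity of a semiring$^\dagger$ $S$ if $f(r_1,\dots,r_m)=g(r_1,\dots,r_m)$ for all $r_1,\dots,r_m\in S$. $M_n(R)$ is the semiring$^\dagger$ of $n\times n$ matrices with the usual matrix operations. *)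

(* Defs.v *)
From HB Require Import structures.
From mathcomp Require Import all_boot all_order all_algebra.

Set Implicit Arguments.
Unset Strict Implicit.
Unset Printing Implicit Defensive.

Record csemiring_dagger := CSD {
  csd_car :> Type;
  csd_add : csd_car -> csd_car -> csd_car;
  csd_mul : csd_car -> csd_car -> csd_car;
  csd_one : csd_car;
  csd_addA : associative csd_add;
  csd_addC : commutative csd_add;
  csd_mulA : associative csd_mul;
  csd_mul1l : left_id csd_one csd_mul;
  csd_mul1r : right_id csd_one csd_mul;
  csd_mulDl : left_distributive csd_mul csd_add;
  csd_mulDr : right_distributive csd_mul csd_add;
  csd_mulC : commutative csd_mul
}.

(** * Elements of the free N-semiring^dagger N{x_1,...,x_n}:
    a finite multiset of words over 'I_n, represented as a list of words;
    the coefficient of a word w is [count_mem w f] and the support of f is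
    the set of words occurring in f. *)
Definition free_nsr (n : nat) := seq (seq 'I_n).

Definition supp_disjoint n (f g : free_nsr n) : Prop :=
  forall w : seq 'I_n, w \in f -> w \notin g.

Definition eval_int n (f : free_nsr n) (A : 'I_n -> 'M[int]_n) : 'M[int]_n :=
  (\sum_(w <- f) \prod_(x <- w) A x)%R.

(** Since R need not have a zero, the
    matrix operations (in particular the identity matrix, needed to evaluate
    the empty word, and empty sums) are computed in R with a zero adjoined
    ([option R], [None] = 0).  For matrices with entries in R and words of
    positive length this is exactly the usual arithmetic of M_n(R). *)
Section ZeroAdjoined.
Variable R : csemiring_dagger.

Definition oadd (x y : option R) : option R :=
  match x, y with
  | None, _ => y
  | _, None => x
  | Some a, Some b => Some (csd_add a b)
  end.

Definition omul (x y : option R) : option R :=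
  match x, y with
  | Some a, Some b => Some (csd_mul a b)
  | _, _ => None
  end.

Variable n : nat.

Definition omat := 'I_n -> 'I_n -> option R.

Definition omat_add (A B : omat) : omat := fun i j => oadd (A i j) (B i j).
Definition omat_mul (A B : omat) : omat :=
  fun i j => foldr (fun k acc => oadd (omul (A i k) (B k j)) acc) None (enum 'I_n).
Definition omat_one : omat := fun i j => if i == j then Some (csd_one R) else None.
Definition omat_zero : omat := fun _ _ => None.

Definition eval_word (A : 'I_n -> omat) (w : seq 'I_n) : omat :=
  foldr (fun x acc => omat_mul (A x) acc) omat_one w.

Definition eval_sr (f : free_nsr n) (A : 'I_n -> omat) : omat :=
  foldr (fun w acc => omat_add (eval_word A w) acc) omat_zero f.

End ZeroAdjoined.

Definition is_sr_identity (R : csemiring_dagger) n (f g : free_nsr n) : Prop :=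
  forall A : 'I_n -> 'I_n -> 'I_n -> R,
    let A' := fun x i j => Some (A x i j) in
    forall i j : 'I_n, eval_sr f A' i j = eval_sr g A' i j.

(* Main.v *)
Require Import Defs.
From HB Require Import structures.
From mathcomp Require Import all_boot all_order all_algebra.
Set Implicit Arguments.
Unset Strict Implicit.
Unset Printing Implicit Defensive.

Section Opt.
Variable R : csemiring_dagger.

Lemma oaddA : associative (@oadd R).
Proof. by move=> [x|] [y|] [z|] //=; rewrite csd_addA. Qed.
Lemma oaddC : commutative (@oadd R).
Proof. by move=> [x|] [y|] //=; rewrite csd_addC. Qed.
Lemma oadd0 : left_id None (@oadd R).
Proof. by case. Qed.
Lemma omulA : associative (@omul R).
Proof. by move=> [x|] [y|] [z|] //=; rewrite csd_mulA. Qed.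
Lemma omulC : commutative (@omul R).
Proof. by move=> [x|] [y|] //=; rewrite csd_mulC. Qed.
Lemma omul1 : left_id (Some (csd_one R)) (@omul R).
Proof. by case=> //= x; rewrite csd_mul1l. Qed.

HB.instance Definition _ := Monoid.isComLaw.Build (option R) None (@oadd R) oaddA oaddC oadd0.
HB.instance Definition _ := Monoid.isComLaw.Build (option R) (Some (csd_one R)) (@omul R) omulA omulC omul1.

Lemma omulDr a x y : omul a (oadd x y) = oadd (omul a x) (omul a y) :> option R.
Proof. by case: a x y => [a|] [x|] [y|] //=; rewrite csd_mulDr. Qed.

Lemma omul_sumr I (r : seq I) a (F : I -> option R) :
  omul a (\big[@oadd R/None]_(i <- r) F i) = \big[@oadd R/None]_(i <- r) omul a (F i).
Proof.
elim: r => [|x r IH]; first by rewrite !big_nil; case: a.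
by rewrite !big_cons omulDr IH.
Qed.
End Opt.
Section Mons.
Variable n : nat.
Definition V := ('I_n * 'I_n * 'I_n)%type.

Fixpoint mons (w : seq 'I_n) (i j : 'I_n) : seq (seq V) :=
  match w with
  | [::] => if i == j then [:: [::]] else [::]
  | x :: w' => flatten [seq [seq (x, i, k) :: m | m <- mons w' k j] | k <- enum 'I_n]
  end.

Definition Mtot (f : free_nsr n) i j := flatten [seq mons w i j | w <- f].

Variable R : csemiring_dagger.
Variable A : 'I_n -> 'I_n -> 'I_n -> R.
Definition A' := fun x i j => Some (A x i j).
Definition oprod (m : seq V) := \big[@omul R/Some (csd_one R)]_(v <- m) Some (A v.1.1 v.1.2 v.2).

Lemma eval_word_mons w i j :
  eval_word A' w i j = \big[@oadd R/None]_(m <- mons w i j) oprod m.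
Proof.
elim: w i j => [|x w IH] i j /=.
  rewrite /omat_one; case: (i == j); last by rewrite big_nil.
  by rewrite big_cons big_nil /oprod big_nil.
rewrite /omat_mul big_flatten big_map.
have -> : forall s, foldr (fun k acc => oadd (omul (A' x i k) (eval_word A' w k j)) acc) None s
   = \big[@oadd R/None]_(k <- s) omul (A' x i k) (eval_word A' w k j).
  by elim => [|k s IHs]; rewrite ?big_nil // big_cons -IHs.
apply: eq_bigr => k _; rewrite IH big_map omul_sumr.
by apply: eq_bigr => m _; rewrite /oprod big_cons.
Qed.

Lemma eval_sr_mons f i j :
  eval_sr f A' i j = \big[@oadd R/None]_(m <- Mtot f i j) oprod m.
Proof.
elim: f => [|w f IH]; first by rewrite /Mtot big_nil.
by rewrite /Mtot /= big_cat /= -IH /omat_add eval_word_mons.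
Qed.
End Mons.

Section IntSide.
Local Open Scope ring_scope.
Import GRing.Theory.
Variable n : nat.
Variable A : 'I_n -> 'M[int]_n.
Definition iprod (m : seq (V n)) : int := \prod_(v <- m) A v.1.1 v.1.2 v.2.

Lemma prod_mons w i j :
  (\prod_(x <- w) A x) i j = \sum_(m <- mons w i j) iprod m.
Proof.
elim: w i j => [|x w IH] i j /=.
  rewrite big_nil -idmxE mxE; case: (i == j); last by rewrite big_nil.
  by rewrite big_cons big_nil /iprod big_nil addr0.
rewrite big_cons -mulmxE mxE big_flatten /= big_map -big_enum /=.
apply: eq_bigr => k _; rewrite IH big_map mulr_sumr.
by apply: eq_bigr => m _; rewrite /iprod big_cons.
Qed.

Lemma eval_int_mons f i j :
  eval_int f A i j = \sum_(m <- Mtot f i j) iprod m.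
Proof.
rewrite /eval_int summxE /Mtot big_flatten /= big_map.
by apply: eq_bigr => w _; rewrite prod_mons.
Qed.
End IntSide.
Section Enc.
Variable T : finType.
Variable D : nat.
Definition encs (s : seq T) (cv : T -> nat) := foldr (fun v acc => cv v + D * acc) 0 s.
Definition enc := encs (enum T).

Lemma encs_add s a b : encs s (fun u => a u + b u) = encs s a + encs s b.
Proof.
elim: s => [|x s IH] //=; rewrite IH mulnDr.
by rewrite -!addnA; congr addn; rewrite addnC -!addnA; congr addn; rewrite addnC.
Qed.

Lemma encs0 s : encs s (fun _ => 0) = 0.
Proof. by elim: s => //= x s ->; rewrite muln0. Qed.

Lemma encs_inj s a b : 0 < D -> (forall v, a v < D) -> (forall v, b v < D) ->
  encs s a = encs s b -> forall v, v \in s -> a v = b v.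
Proof.
move=> D0 Ha Hb; elim: s => [|x s IH] //= H v.
have H1 : (a x + D * encs s a) %% D = (b x + D * encs s b) %% D by rewrite H.
rewrite (addnC (a x)) (addnC (b x)) !(mulnC D) !modnMDl !modn_small ?Ha ?Hb // in H1.
have H2 : encs s a = encs s b.
  by move: H; rewrite H1 => /eqP; rewrite eqn_add2l eqn_mul2l gtn_eqF //= => /eqP.
by rewrite in_cons => /orP [/eqP -> //| vs]; apply: IH.
Qed.

Definition wt v := enc (fun u => (v == u : nat)).
Definition E (m : seq T) := enc (fun u => count_mem u m).

Lemma sum_wt m : \sum_(v <- m) wt v = E m.
Proof.
elim: m => [|v m IH]; first by rewrite big_nil /E /enc encs0.
by rewrite big_cons IH /E /wt /enc -encs_add.
Qed.
End Enc.

Lemma fiber_big (T : eqType) (S : Type) (idx : S) (op : Monoid.com_law idx)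
   (P : pred T) (E : T -> nat) (F : T -> S) (M1 M2 : seq T) :
  (forall m1 m2, P m1 -> P m2 -> E m1 = E m2 -> F m1 = F m2) ->
  all P M1 -> all P M2 -> perm_eq (map E M1) (map E M2) ->
  \big[op/idx]_(m <- M1) F m = \big[op/idx]_(m <- M2) F m.
Proof.
move=> HF; elim: M1 M2 => [|m M1 IH] M2 /= H1 H2 Hp.
  by move: Hp; rewrite perm_sym => /perm_nilP; case: M2 {H2}.
case/andP: H1 => Pm H1.
have : E m \in map E M2 by rewrite -(perm_mem Hp) mem_head.
case/mapP => m2 m2in Em.
have Hr := perm_to_rem m2in.
rewrite (perm_big _ Hr) !big_cons (HF m m2) //; last by move/allP: H2; apply.
rewrite (IH (rem m2 M2)) //.
  by apply/allP => y /mem_rem yin; move/allP: H2; apply.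
by move: Hp; rewrite (permPr (perm_map E Hr)) /= Em perm_cons.
Qed.
Lemma size_le_sumn (T : eqType) (L : seq (seq T)) m : m \in L -> size m <= sumn (map size L).
Proof.
elim: L => [|x L IH] //=; rewrite in_cons => /orP [/eqP -> | /IH H]; first exact: leq_addr.
exact: leq_trans H (leq_addl _ _).
Qed.

Lemma perm_of_count (T : eqType) (s1 s2 : seq T) :
  (forall x, count_mem x s1 = count_mem x s2) -> perm_eq s1 s2.
Proof. by move=> H; apply/allP => x _ /=; rewrite H. Qed.

Section Poly.
Local Open Scope ring_scope.
Import GRing.Theory Num.Theory.

Lemma expr_sum (t : int) (T : Type) (m : seq T) (w : T -> nat) :
  \prod_(v <- m) t ^+ w v = t ^+ (\sum_(v <- m) w v)%N.
Proof.
elim: m => [|x m IH]; first by rewrite !big_nil.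
by rewrite !big_cons IH exprD.
Qed.

Lemma coef_sumX (T : Type) (M : seq T) (E : T -> nat) e :
  (\sum_(m <- M) 'X^(E m) : {poly int})`_e = (count (fun m => E m == e) M)%:R.
Proof.
elim: M => [|x M IH]; first by rewrite big_nil coef0.
by rewrite big_cons coefD coefXn IH /= natrD eq_sym.
Qed.

Lemma poly_count (T : Type) (M1 M2 : seq T) (E : T -> nat) :
  (forall t : int, \sum_(m <- M1) t ^+ E m = \sum_(m <- M2) t ^+ E m) ->
  perm_eq (map E M1) (map E M2).
Proof.
move=> Ht.
set P : {poly int} := \sum_(m <- M1) 'X^(E m) - \sum_(m <- M2) 'X^(E m).
have P0 : P = 0.
  apply: (@roots_geq_poly_eq0 _ P [seq (k%:Z) | k <- iota 0 (size P)]).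
  - apply/allP => x _; rewrite /root /P hornerD hornerN !horner_sum.
    under eq_bigr do rewrite hornerXn.
    under [X in _ - X]eq_bigr do rewrite hornerXn.
    by rewrite Ht subrr.
  - by rewrite map_inj_uniq ?iota_uniq // => a b [].
  - by rewrite size_map size_iota.
apply/perm_of_count => e; rewrite !count_map.
have := congr1 (fun p : {poly int} => p`_e) P0.
rewrite /P coefB !coef_sumX coef0 => /eqP; rewrite subr_eq0 eqr_nat => /eqP.
by [].
Qed.
End Poly.
Theorem theorem5p4 (n : nat) (f g : free_nsr n) :
  supp_disjoint f g ->
  (forall A : 'I_n -> 'M[int]_n, (eval_int f A - eval_int g A = 0)%R) ->
  forall R : csemiring_dagger, is_sr_identity R f g.
Proof.
move=> _ Hint R A A2 i j; rewrite /A2.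
rewrite (eval_sr_mons A f) (eval_sr_mons A g).
set Mf := Mtot f i j; set Mg := Mtot g i j.
set D := (sumn (map size (Mf ++ Mg))).+1.
have D0 : 0 < D by [].
have HP : forall m, m \in Mf ++ Mg -> size m < D.
  by move=> m mi; rewrite ltnS; apply: size_le_sumn.
apply: (@fiber_big _ _ _ _ [pred m | size m < D] (E D)).
- move=> m1 m2 /= s1 s2 Em; apply: perm_big.
  apply: perm_of_count => v.
  apply: (encs_inj D0 _ _ Em); last by rewrite mem_enum.
    by move=> u; apply: leq_ltn_trans (count_size _ _) s1.
  by move=> u; apply: leq_ltn_trans (count_size _ _) s2.
- by apply/allP => m mi; apply: HP; rewrite mem_cat mi.
- by apply/allP => m mi; apply: HP; rewrite mem_cat mi orbT.
apply: poly_count => t.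
pose B := fun x : 'I_n => (\matrix_(a < n, b < n) (t ^+ wt D (x, a, b)))%R.
have := congr1 (fun M : 'M[int]_n => M i j) (Hint B).
rewrite /= !mxE; move/eqP; rewrite GRing.subr_eq0 => /eqP.
rewrite !eval_int_mons /iprod.
have HB : forall m : seq (V n), (\prod_(v <- m) B v.1.1 v.1.2 v.2 = t ^+ E D m)%R.
  move=> m; rewrite -sum_wt -expr_sum; apply: eq_bigr => [[[x a] b]] _.
  by rewrite mxE.
move=> H; rewrite /Mf /Mg -(eq_bigr _ (fun m _ => HB m)) H.
by apply: eq_bigr => m _; exact: HB.
Qed.
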